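(* Let $B\in M_n(\mathbb{Z})$, $B'\in M_{n'}(\mathbb{Z})$ be skew-symmetric and let $R\in M_{n',n}(\mathbb{Z}_{\ge0})$ satisfy ${}^tR\,B'\,R=B$. Then the algebra homomorphism $\psi_R:\mathcal{S}_B\to\mathcal{S}_{B'}$, $\psi_R(y_i)=\,:y'^{Rv_i}:$, is continuous with respect to the degree topologies if and only if every column of $R$ contains a nonzero entry.
   Context: For skew-symmetric $B\in M_n(\mathbb{Z})$, $\mathcal{S}_B$ is the skew polynomial algebra over $\mathbb{Q}(q)$ with basis the monomials $y^{\bf m}=y_1^{m_1}\cdots y_n^{m_n}$, ${\bf m}\in\mathbb{Z}_{\ge0}^n$, and multiplication determined by $y_iy_j=q^{2b_{ij}}y_jy_i$; similarly $\mathcal{S}_{B'}$ with generators $y'_k$. Normal ordering: $:y^{\bf m}:=q^{{}^t{\bf m}L{\bf m}}y^{\bf m}$ with $L$ the strictly lower triangular part of $B$ (similarly for $B'$). The degree topology on $\mathcal{S}_B$ is the linear topology whose basic neighbourhoods of $0$ are the spans of monomials of total degree $m_1+\dots+m_n\ge N$, $N\ge0$; its completion is the skew formal power series algebra $\widehat{\mathcal{S}_B}$. $v_i$ is the $i$-th unit vector. *)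

(* Defs.v *)
From HB Require Import structures.
From mathcomp Require Import all_boot all_order all_algebra.
From mathcomp Require Import fraction.
From mathcomp.multinomials Require Import mpoly.
Set Implicit Arguments. Unset Strict Implicit. Unset Printing Implicit Defensive.
Import Order.TTheory GRing.Theory Num.Theory.
Local Open Scope ring_scope.

Definition Kq : fieldType := {fraction {poly rat}}.
Definition qq : Kq := tofrac ('X : {poly rat}).

(* Underlying Q(q)-vector space of S_B: basis y^m, m in Z_{>=0}^n, encoded as
   the monomials 'X_[m] of {mpoly Kq[n]}.  The (commutative) ring structure
   of mpoly is NOT used; the skew product is skmul below. *)
Definition SB (n : nat) := {mpoly Kq[n]}.

(* t(a) L b, with L the strictly lower triangular part of B *)
Definition lowform n (B : 'M[int]_n) (a b : 'X_{1..n}) : int :=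
  \sum_(i < n) \sum_(j < n) (if (j < i)%N then (a i)%:Z * B i j * (b j)%:Z else 0).

(* y^a y^b = q^(2 ta L b) y^(a+b) (consequence of y_i y_j = q^(2 b_ij) y_j y_i) *)
Definition skmul n (B : 'M[int]_n) (p r : SB n) : SB n :=
  \sum_(a <- msupp p) \sum_(b <- msupp r)
     ((p@_a * r@_b * qq ^ (2%:Z * lowform B a b)) *: 'X_[mnm_add a b]).

Definition skone n : SB n := 'X_[mnm0].

Definition skpow n (B : 'M[int]_n) (p : SB n) (k : nat) : SB n :=
  iter k (skmul B p) (skone n).

Definition nmon n (B : 'M[int]_n) (m : 'X_{1..n}) : SB n :=
  qq ^ (lowform B m m) *: 'X_[m].

Definition colm n' n (R : 'M[nat]_(n', n)) (j : 'I_n) : 'X_{1..n'} :=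
  [multinom R i j | i < n'].

Definition psi_gen n' n (B' : 'M[int]_n') (R : 'M[nat]_(n', n)) (j : 'I_n) : SB n' :=
  nmon B' (colm R j).

Definition psi_mon n' n (B' : 'M[int]_n') (R : 'M[nat]_(n', n)) (m : 'X_{1..n}) : SB n' :=
  foldr (fun j acc => skmul B' (skpow B' (psi_gen B' R j) (m j)) acc)
        (skone n') (enum 'I_n).

Definition psiR n' n (B' : 'M[int]_n') (R : 'M[nat]_(n', n)) (p : SB n) : SB n' :=
  \sum_(m <- msupp p) (p@_m *: psi_mon B' R m).

(* Degree topology: basic neighbourhoods of 0 are
   U_N = span{ y^m : m_1+...+m_n >= N }. *)
Definition degU n (N : nat) (p : SB n) : Prop :=
  forall m, m \in msupp p -> (N <= mdeg m)%N.

Definition deg_open n (U : SB n -> Prop) : Prop :=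
  forall x, U x -> exists N : nat, forall y, degU N y -> U (x + y).

Definition deg_continuous n n' (f : SB n -> SB n') : Prop :=
  forall U : SB n' -> Prop, deg_open U -> deg_open (fun x => U (f x)).

(* Main.v *)
Require Import Defs.
From HB Require Import structures.
From mathcomp Require Import all_boot all_order all_algebra.
From mathcomp Require Import fraction.
From mathcomp.multinomials Require Import mpoly.
Import Order.TTheory GRing.Theory Num.Theory.
Local Open Scope ring_scope.

Lemma degU_le n d1 d2 (p : SB n) : (d1 <= d2)%N -> degU d2 p -> degU d1 p.
Proof. by move=> h H m /H; apply: leq_trans. Qed.

Lemma degU0 n d : degU d (0 : SB n).
Proof. by move=> m; rewrite mcoeff_msupp mcoeff0 eqxx. Qed.

Lemma degUD n d (p q : SB n) : degU d p -> degU d q -> degU d (p + q).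
Proof.
by move=> Hp Hq m /msuppD_le; rewrite mem_cat => /orP [/Hp|/Hq].
Qed.

Lemma degUZ n d c (p : SB n) : degU d p -> degU d (c *: p).
Proof. by move=> Hp m /msuppZ_le /Hp. Qed.

Lemma degUX n d c (m : 'X_{1..n}) : (d <= mdeg m)%N -> degU d (c *: ('X_[m] : SB n)).
Proof. by move=> h m' /msuppZ_le; rewrite msuppX inE => /eqP ->. Qed.

Lemma degU_sum n d (T : eqType) (s : seq T) (F : T -> SB n) :
  (forall x, x \in s -> degU d (F x)) -> degU d (\sum_(x <- s) F x).
Proof.
move=> H; rewrite big_seq; apply: big_ind => //.
  exact: degU0.
exact: degUD.
Qed.

Lemma degU_skmul n (B : 'M[int]_n) d1 d2 p r :
  degU d1 p -> degU d2 r -> degU (d1 + d2) (skmul B p r).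
Proof.
move=> Hp Hr; apply: degU_sum => a /Hp ha; apply: degU_sum => b /Hr hb.
apply: degUX; rewrite mdegE.
have -> : (\sum_i (mnm_add a b) i = \sum_i a i + \sum_i b i)%N.
  by rewrite -big_split; apply: eq_bigr => i _; rewrite mnmE.
by rewrite -!mdegE leq_add.
Qed.

Lemma degU_skpow n (B : 'M[int]_n) d p k :
  degU d p -> degU (d * k) (skpow B p k).
Proof.
move=> Hp; elim: k => [|k IH]; first by move=> m _; rewrite muln0.
by rewrite mulnS; apply: degU_skmul.
Qed.

Lemma lowform0l n (B : 'M[int]_n) b : lowform B 0%MM b = 0.
Proof.
rewrite /lowform big1 // => i _; rewrite big1 // => j _.
by case: ifP => // _; rewrite mnmE !mul0r.
Qed.

Lemma skmul1 n (B : 'M[int]_n) (p : SB n) : skmul B (skone n) p = p.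
Proof.
rewrite /skmul /skone msuppX big_seq1 [RHS]mpolyE.
apply: eq_bigr => b _.
rewrite mcoeffX eqxx lowform0l mulr0 expr0z mulr1 mul1r.
by congr (_ *: 'X_[_]); apply/mnmP => i; rewrite mnmE mnmE add0n.
Qed.

Lemma skpow1 n (B : 'M[int]_n) k : skpow B (skone n) k = skone n.
Proof. by elim: k => //= k IH; rewrite /skpow /= -/(skpow _ _ _) IH skmul1. Qed.

Lemma sum_supp n (T : nmodType) (F : Kq -> 'X_{1..n} -> T) (p : SB n) s :
  (forall m, F 0 m = 0) -> uniq s -> {subset msupp p <= s} ->
  \sum_(m <- msupp p) F p@_m m = \sum_(m <- s) F p@_m m.
Proof.
move=> F0 us sub.
rewrite -(perm_big _ (introT permPl (perm_filterC (mem (msupp p)) s))) big_cat /=.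
rewrite [X in _ = _ + X]big_seq [X in _ = _ + X]big1 ?addr0; last first.
  move=> m; rewrite mem_filter /= => /andP [h _].
  by move: h; rewrite mcoeff_msupp negbK => /eqP ->.
apply: perm_big; apply: uniq_perm; first exact: msupp_uniq.
  exact: filter_uniq.
by move=> m; rewrite mem_filter /=; case h: (m \in msupp p) => //=; rewrite sub.
Qed.

Lemma psiRD n n' (B' : 'M[int]_n') (R : 'M[nat]_(n', n)) (x y : SB n) :
  psiR B' R (x + y) = psiR B' R x + psiR B' R y.
Proof.
set s := undup (msupp x ++ msupp y).
have us : uniq s by apply: undup_uniq.
rewrite /psiR (@sum_supp _ _ (fun c m => c *: psi_mon B' R m) (x + y) s) ?us //;
  last 2 first.
- by move=> m; rewrite scale0r.
- by move=> m /msuppD_le; rewrite mem_undup.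
rewrite (@sum_supp _ _ (fun c m => c *: psi_mon B' R m) x s) ?us //; last 2 first.
- by move=> m; rewrite scale0r.
- by move=> m h; rewrite mem_undup mem_cat h.
rewrite (@sum_supp _ _ (fun c m => c *: psi_mon B' R m) y s) ?us //; last 2 first.
- by move=> m; rewrite scale0r.
- by move=> m h; rewrite mem_undup mem_cat h orbT.
by rewrite -big_split; apply: eq_bigr => m _; rewrite mcoeffD scalerDl.
Qed.

Lemma psiR0 n n' (B' : 'M[int]_n') (R : 'M[nat]_(n', n)) : psiR B' R 0 = 0.
Proof.
rewrite /psiR; have /eqP -> : msupp (0 : SB n) == [::] by rewrite msupp_eq0.
by rewrite big_nil.
Qed.

Theorem proposition4p5 (n n' : nat) (B : 'M[int]_n) (B' : 'M[int]_n')
    (R : 'M[nat]_(n', n)) :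
  B^T = - B -> B'^T = - B' ->
  (map_mx (fun k : nat => k%:Z) R)^T *m B' *m map_mx (fun k : nat => k%:Z) R = B ->
  deg_continuous (psiR B' R) <-> (forall j : 'I_n, exists i : 'I_n', R i j != 0%N).
Proof.
move=> _ _ _; split.
- move=> Hc j.
  case: (boolP [exists i, R i j != 0%N]) => [/existsP //| /existsPn H0].
  exfalso.
  have oU : deg_open (@degU n' 1).
    move=> x Hx; exists 1%N => y Hy; exact: degUD.
  have [N HN] := Hc _ oU 0 (eq_ind_r (@degU n' 1) (degU0 _ _) (psiR0 _ _ B' R)).
  pose m : 'X_{1..n} := [multinom (if i == j then N else 0%N) | i < n].
  have Hy : degU N ('X_[m] : SB n).
    move=> m'; rewrite msuppX inE => /eqP ->.
    by rewrite mdegE (bigD1 j) //= mnmE eqxx leq_addr.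
  have := HN _ Hy; rewrite add0r /psiR msuppX big_seq1 mcoeffX eqxx scale1r.
  have -> : psi_mon B' R m = skone n'.
    rewrite /psi_mon; elim: (enum 'I_n) => //= i s ->.
    case: (eqVneq i j) => [->|ne].
      have -> : psi_gen B' R j = skone n'.
        rewrite /psi_gen /nmon /skone.
        have -> : colm R j = 0%MM.
          apply/mnmP => i'; rewrite !mnmE.
          by have := H0 i'; rewrite negbK => /eqP.
        by rewrite lowform0l expr0z scale1r.
      by rewrite skpow1 skmul1.
    by rewrite mnmE (negbTE ne) /= skmul1.
  by move=> /(_ 0%MM); rewrite /skone msuppX inE eqxx mdeg0 => /(_ isT).
- move=> Hcol.
  have Hmon : forall m, degU (mdeg m) (psi_mon B' R m).
    move=> m; rewrite mdegE -big_enum /psi_mon.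
    elim: (enum 'I_n) => [|i s IH] /=; first by rewrite big_nil => m' _.
    rewrite big_cons; apply: degU_skmul => //.
    rewrite -[X in degU X _]mul1n; apply: degU_skpow.
    rewrite /psi_gen /nmon; apply: degUX.
    have [i0 Hi0] := Hcol i.
    rewrite mdegE (bigD1 i0) //= mnmE; move: Hi0; case: (R i0 i) => //= k _.
  have Hpsi : forall N y, degU N y -> degU N (psiR B' R y).
    move=> N y Hy; apply: degU_sum => m /Hy hm.
    apply: degUZ; exact: degU_le hm (Hmon m).
  move=> U oU x Ux; have [N HN] := oU _ Ux.
  exists N => y Hy; rewrite /= psiRD; exact: HN (Hpsi _ _ Hy).
Qed.
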